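(* Let $\alpha\in(0,1)$ be irrational, and for $n\ge1$ let $p_n/q_n$ be its $n$th convergent. Then $$P_{q_n}(\alpha)=\prod_{r=1}^{q_n}|2\sin\pi r\alpha|=A_nB_nC_n,$$ where $$A_n=|2q_n\sin(\pi\Lambda_n)|,\qquad B_n=\Big|\prod_{t=1}^{q_n-1}\frac{s_{nt}}{2\sin(\pi t/q_n)}\Big|,\qquad C_n=\prod_{t=1}^{q_n-1}\Big(1-\frac{s_{n0}^2}{s_{nt}^2}\Big)^{1/2}.$$ Here, for $t\in\{0,1,\ldots,q_n-1\}$, $$s_{nt}=2\sin\Big(\pi\Big[\frac t{q_n}-|\Lambda_n|\Big(\Big\{\frac{tq_{n-1}}{q_n}\Big\}-\frac12\Big)\Big]\Big).$$
   Context: $\alpha=[0;a_1,a_2,\ldots]$, with convergents given by $q_0=0$, $q_1=1$, $q_{n+1}=a_nq_n+q_{n-1}$ and $p_0=1$, $p_1=0$, $p_{n+1}=a_np_n+p_{n-1}$. $\Lambda_n=q_n\alpha-p_n$. $P_N(\alpha)=\prod_{r=1}^N|2\sin(\pi r\alpha)|$. $\{x\}$ denotes the fractional part of $x$. *)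

(* Defs.v *)
From Stdlib Require Import Reals ZArith.
Open Scope R_scope.

Fixpoint prodR (f : nat -> R) (N : nat) : R :=
  match N with
  | O => 1
  | S k => prodR f k * f (S k)
  end.

Fixpoint cf_rest (a : R) (n : nat) : R :=
  match n with
  | O => a
  | S k => frac_part (/ cf_rest a k)
  end.

(* partial quotients: a = [0; cf_digit a 1, cf_digit a 2, ...] *)
Definition cf_digit (a : R) (n : nat) : nat :=
  Z.to_nat (Int_part (/ cf_rest a (n - 1))).

(* pairs (q_n, q_{n+1}) with q_0 = 0, q_1 = 1, q_{n+1} = a_n q_n + q_{n-1} *)
Fixpoint cfq_pair (a : R) (n : nat) : nat * nat :=
  match n with
  | O => (0%nat, 1%nat)
  | S k => let (x, y) := cfq_pair a k in (y, (cf_digit a (S k) * y + x)%nat)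
  end.
Definition cf_q (a : R) (n : nat) : nat := fst (cfq_pair a n).

(* pairs (p_n, p_{n+1}) with p_0 = 1, p_1 = 0, p_{n+1} = a_n p_n + p_{n-1} *)
Fixpoint cfp_pair (a : R) (n : nat) : nat * nat :=
  match n with
  | O => (1%nat, 0%nat)
  | S k => let (x, y) := cfp_pair a k in (y, (cf_digit a (S k) * y + x)%nat)
  end.
Definition cf_p (a : R) (n : nat) : nat := fst (cfp_pair a n).

Definition Lam (a : R) (n : nat) : R := INR (cf_q a n) * a - INR (cf_p a n).

Definition Psin (N : nat) (a : R) : R :=
  prodR (fun r => Rabs (2 * sin (PI * INR r * a))) N.

Definition irrational (a : R) : Prop :=
  ~ exists (p q : Z), q <> 0%Z /\ a = IZR p / IZR q.

Definition s_nt (a : R) (n t : nat) : R :=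
  2 * sin (PI * (INR t / INR (cf_q a n)
     - Rabs (Lam a n) * (frac_part (INR t * INR (cf_q a (n - 1)) / INR (cf_q a n)) - 1 / 2))).

Definition A_n (a : R) (n : nat) : R :=
  Rabs (2 * INR (cf_q a n) * sin (PI * Lam a n)).

Definition B_n (a : R) (n : nat) : R :=
  Rabs (prodR (fun t => s_nt a n t / (2 * sin (PI * INR t / INR (cf_q a n))))
              (cf_q a n - 1)).

Definition C_n (a : R) (n : nat) : R :=
  prodR (fun t => sqrt (1 - (s_nt a n 0) ^ 2 / (s_nt a n t) ^ 2)) (cf_q a n - 1).

(* Main.v *)
Require Import Defs.
From Stdlib Require Import Reals ZArith.
Open Scope R_scope.
From Stdlib Require Import Lra Lia List Permutation.

Lemma trig_c k a : cos (INR (S k) * a) = cos a * cos (INR k * a) - sin a * sin (INR k * a).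
Proof. rewrite S_INR. replace ((INR k + 1) * a) with (a + INR k * a) by ring. apply cos_plus. Qed.
Lemma trig_s k a : sin (INR (S k) * a) = cos a * sin (INR k * a) + sin a * cos (INR k * a).
Proof. rewrite S_INR. replace ((INR k + 1) * a) with (a + INR k * a) by ring. rewrite sin_plus. ring. Qed.
Lemma trig_q q : (0 < q)%nat -> cos (INR q * (2 * PI / INR q)) = 1 /\ sin (INR q * (2 * PI / INR q)) = 0.
Proof. intro H. assert (INR q <> 0) by (apply not_0_INR; lia).
  replace (INR q * (2 * PI / INR q)) with (2 * PI) by (field; auto).
  split; [apply cos_2PI | apply sin_2PI]. Qed.
Lemma trig_ne1 q k : (0 < k < q)%nat -> cos (INR k * (2 * PI / INR q)) <> 1.
Proof. intros H E. assert (0 < INR k) by (apply lt_0_INR; lia).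
  assert (INR k < INR q) by (apply lt_INR; lia).
  set (x := INR k * (2 * PI / INR q)).
  assert (0 < x < 2 * PI). { unfold x. split. apply Rmult_lt_0_compat; auto. apply Rdiv_lt_0_compat; [pose PI_RGT_0; lra| lra].
    apply Rmult_lt_reg_r with (/ (2*PI) * INR q). apply Rmult_lt_0_compat. apply Rinv_0_lt_compat; pose PI_RGT_0; lra. lra.
    replace (INR k * (2 * PI / INR q) * (/ (2 * PI) * INR q)) with (INR k) by (field; pose PI_RGT_0; lra).
    replace (2 * PI * (/ (2 * PI) * INR q)) with (INR q) by (field; pose PI_RGT_0; lra). lra. }
  assert (0 < sin (x/2)) by (apply sin_gt_0; lra).
  assert (cos x = 1 - 2 * sin (x/2) * sin (x/2)) by (rewrite <- cos_2a_sin; f_equal; field).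
  fold x in E. nra. Qed.
Lemma trig_norm q k : (0 < k < q)%nat ->
  sqrt ((1 - cos (INR k * (2 * PI / INR q))) ^ 2 + (sin (INR k * (2 * PI / INR q))) ^ 2)
  = 2 * sin (PI * INR k / INR q).
Proof. intros H. assert (0 < INR k) by (apply lt_0_INR; lia).
  assert (INR k < INR q) by (apply lt_INR; lia).
  pose proof PI_RGT_0.
  set (y := PI * INR k / INR q).
  assert (0 < y < PI). { unfold y. split. apply Rdiv_lt_0_compat; [apply Rmult_lt_0_compat|]; lra.
    apply Rmult_lt_reg_r with (INR q / PI). apply Rdiv_lt_0_compat; lra.
    replace (PI * INR k / INR q * (INR q / PI)) with (INR k) by (field; lra).
    replace (PI * (INR q / PI)) with (INR q) by (field; lra). lra. }
  assert (0 < sin y) by (apply sin_gt_0; lra).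
  replace (INR k * (2 * PI / INR q)) with (2 * y) by (unfold y; field; lra).
  rewrite cos_2a_sin, sin_2a.
  replace ((1 - (1 - 2 * sin y * sin y)) ^ 2 + (2 * sin y * cos y) ^ 2) with ((2 * sin y)^2)
   by (pose proof (sin2_cos2 y); unfold Rsqr in *; nra).
  apply sqrt_pow2. lra. Qed.


Definition ang (q : nat) : R := 2 * PI / INR q.
Lemma trig0 a : cos (INR 0 * a) = 1 /\ sin (INR 0 * a) = 0.
Proof. simpl. rewrite Rmult_0_l. split; [apply cos_0|apply sin_0]. Qed.
Module MC.
From mathcomp Require Import all_boot all_algebra.
From mathcomp Require Import reals Rstruct complex.
Import GRing.Theory Num.Theory.
Local Open Scope ring_scope.
Import ComplexField.Normc.

Lemma prod_1m (F : fieldType) (q : nat) (z : F) : q.-primitive_root z ->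
  \prod_(1 <= i < q) (1 - z ^+ i) = q%:R.
Proof.
move=> pz. have q0 := prim_order_gt0 pz.
have H := factor_Xn_sub_1 pz.
rewrite big_ltn // expr0 in H.
have E : ('X^q - 1 : {poly F}) = ('X - 1) * \sum_(i < q) 'X ^+ (q.-1 - i) * 1 ^+ i.
  by rewrite -subrXX expr1n.
rewrite E in H. move/mulfI: H => H.
have /H {}H : ('X - 1%:P : {poly F}) != 0 by rewrite polyXsubC_eq0.
have := congr1 (horner^~ 1) H.
rewrite horner_prod horner_sum.
have S : \sum_(i < q) ('X^(q.-1 - i) * 1 ^+ i : {poly F}).[1] = q%:R.
  rewrite (eq_bigr (fun _ => 1)) ?sumr_const ?card_ord // => i _.
  by rewrite expr1n mulr1 hornerXn expr1n.
rewrite S => <-. apply: eq_bigr => i _; by rewrite hornerXsubC.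
Qed.

Definition om (q : nat) : R[i] := Complex (cos (ang q)) (sin (ang q)).
Lemma om_exp q k : om q ^+ k = Complex (cos (Rmult (INR k) (ang q))) (sin (Rmult (INR k) (ang q))).
Proof.
elim: k => [|k IH].
  by rewrite expr0 !(proj1 (trig0 _)) (proj2 (trig0 _)).
rewrite exprS IH trig_c trig_s /om /=. by [].
Qed.
Lemma om_prim q : (0 < q)%N -> q.-primitive_root (om q).
Proof.
move=> q0. apply/andP; split => //. apply/forallP => i. apply/eqP.
rewrite unity_rootE om_exp.
case: (ltnP i.+1 q) => h.
  rewrite (ltn_eqF h). apply/negbTE/negP => /eqP [] E _.
  apply: (trig_ne1 q i.+1) => //. split; apply/ltP => //.
have -> : i.+1 = q by apply/eqP; rewrite eqn_leq h ltn_ord.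
rewrite eqxx. have [A B] := trig_q q (elimT ltP q0). apply/eqP. rewrite /ang A B. by [].
Qed.

Lemma normc_1m q i : (0 < i < q)%N ->
  normc (1 - om q ^+ i) = Rmult (IZR (Zpos (xO xH))) (sin (Rdiv (Rmult PI (INR i)) (INR q))).
Proof.
move=> /andP [h1 h2]. rewrite -(trig_norm q i); last by split; apply/ltP.
rewrite om_exp /= -RsqrtE. congr sqrt. rewrite !Rmult_1_r sub0r sqrrN !expr2.
by [].
Qed.
Lemma sinprod_mc q : (0 < q)%N ->
  \prod_(1 <= i < q) Rmult (IZR (Zpos (xO xH))) (sin (Rdiv (Rmult PI (INR i)) (INR q))) = INR q.
Proof.
move=> q0. have := congr1 (@normc _) (@prod_1m _ _ _ (om_prim q q0)).
rewrite (big_morph (@normc _) (@normcM _) (@normc1 _)).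
rewrite (eq_big_nat _ _ (F2 := fun i => Rmult (IZR (Zpos (xO xH))) (sin (Rdiv (Rmult PI (INR i)) (INR q))))); last first.
  move=> i /andP [h1 h2]. apply: normc_1m. by rewrite h2 (leq_trans _ h1).
move=> ->. rewrite -(rmorph_nat (real_complex R)) /= expr0n addr0 sqrtr_sqr ger0_norm ?INRE //.
Qed.

Lemma prodR_big f N : prodR f N = \prod_(1 <= i < N.+1) f i.
Proof. elim: N => [|N IH]; first by rewrite big_geq.
by rewrite big_nat_recr //= IH. Qed.
Lemma sinprod q : (0 < q)%coq_nat ->
  prodR (fun t => Rmult (IZR (Zpos (xO xH))) (sin (Rdiv (Rmult PI (INR t)) (INR q)))) (Nat.sub q 1) = INR q.
Proof. move=> /ltP q0. rewrite prodR_big. have -> : (Nat.sub q 1).+1 = q by rewrite -/(subn q 1) subn1 prednK. exact: sinprod_mc. Qed.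
End MC.
Lemma sinprod q : (0 < q)%nat -> prodR (fun t => 2 * sin (PI * INR t / INR q)) (q - 1) = INR q.
Proof. exact (MC.sinprod q). Qed.

Section CF.
Variable a : R.
Hypothesis h0 : 0 < a.
Hypothesis h1 : a < 1.
Hypothesis hirr : irrational a.

Notation x := (cf_rest a).

Lemma cfq_S n : cf_q a (S n) = snd (cfq_pair a n).
Proof. unfold cf_q; simpl; destruct (cfq_pair a n); reflexivity. Qed.
Lemma cfp_S n : cf_p a (S n) = snd (cfp_pair a n).
Proof. unfold cf_p; simpl; destruct (cfp_pair a n); reflexivity. Qed.
Lemma cfq_SS n : cf_q a (S (S n)) = (cf_digit a (S n) * cf_q a (S n) + cf_q a n)%nat.
Proof. rewrite cfq_S. unfold cf_q. simpl. destruct (cfq_pair a n); reflexivity. Qed.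
Lemma cfp_SS n : cf_p a (S (S n)) = (cf_digit a (S n) * cf_p a (S n) + cf_p a n)%nat.
Proof. rewrite cfp_S. unfold cf_p. simpl. destruct (cfp_pair a n); reflexivity. Qed.

Lemma Lam_SS n : Lam a (S (S n)) = INR (cf_digit a (S n)) * Lam a (S n) + Lam a n.
Proof. unfold Lam. rewrite cfq_SS, cfp_SS, !plus_INR, !mult_INR. ring. Qed.

Lemma x_lt1 m : x m < 1.
Proof. destruct m; simpl. exact h1. destruct (base_fp (/ x m)); lra. Qed.

Lemma Int_part_nonneg r : 0 < r -> (0 <= Int_part r)%Z.
Proof. intro H. destruct (base_Int_part r). assert (-1 < IZR (Int_part r)) by lra.
  apply lt_IZR in H2. lia. Qed.

Lemma digit_eq m : 0 < x m -> INR (cf_digit a (S m)) = / x m - x (S m).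
Proof. intro H. unfold cf_digit. replace (S m - 1)%nat with m by lia.
  rewrite INR_IZR_INZ, Z2Nat.id. simpl x. unfold frac_part. ring.
  apply Int_part_nonneg. apply Rinv_0_lt_compat; auto. Qed.

Lemma digit_ge1 m : 0 < x m -> (1 <= cf_digit a (S m))%nat.
Proof. intro H. pose proof (x_lt1 m). unfold cf_digit. replace (S m - 1)%nat with m by lia.
  assert (1 < / x m). { rewrite <- Rinv_1. apply Rinv_lt_contravar; lra. }
  destruct (base_Int_part (/ x m)).
  assert (0 < IZR (Int_part (/ x m))) by lra. apply lt_IZR in H4. lia. Qed.

Lemma rec_Lam m : (forall j, (j < m)%nat -> 0 < x j) -> Lam a (S m) = - x m * Lam a m.
Proof.
  induction m as [|m IH]; intros Hp.
  - unfold Lam. simpl. unfold cf_q, cf_p. simpl. ring.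
  - rewrite Lam_SS. rewrite digit_eq by (apply Hp; lia).
    rewrite IH by (intros; apply Hp; lia).
    assert (0 < x m) by (apply Hp; lia).
    field. lra.
Qed.

Lemma q_pos k : (forall j, (j < k)%nat -> 0 < x j) -> (1 <= cf_q a (S k))%nat.
Proof.
  induction k as [|k IH]; intros Hp.
  - unfold cf_q; simpl; lia.
  - rewrite cfq_SS. assert (1 <= cf_digit a (S k))%nat by (apply digit_ge1, Hp; lia).
    assert (1 <= cf_q a (S k))%nat by (apply IH; intros; apply Hp; lia). nia.
Qed.

Lemma x_pos_all m : forall j, (j <= m)%nat -> 0 < x j.
Proof.
  induction m as [|m IH]; intros j Hj.
  - replace j with 0%nat by lia. simpl. exact h0.
  - destruct (Nat.eq_dec j (S m)) as [->|]; [|apply IH; lia].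
    simpl x. destruct (base_fp (/ x m)) as [A _].
    destruct (Rle_lt_or_eq_dec 0 (frac_part (/ x m))) as [B|B]; [lra|exact B|].
    exfalso. apply hirr.
    assert (L : Lam a (S (S m)) = 0).
    { rewrite rec_Lam. simpl x. rewrite <- B. ring. intros j' Hj'. apply IH; lia. }
    assert (Q : (1 <= cf_q a (S (S m)))%nat) by (apply q_pos; intros; apply IH; lia).
    unfold Lam in L.
    exists (Z.of_nat (cf_p a (S (S m)))), (Z.of_nat (cf_q a (S (S m)))). split; [lia|].
    rewrite <- !INR_IZR_INZ. assert (0 < INR (cf_q a (S (S m)))) by (apply lt_0_INR; lia).
    field_simplify_eq; lra.
Qed.

Lemma x_pos m : 0 < x m.
Proof. apply (x_pos_all m); lia. Qed.

Lemma LamS m : Lam a (S m) = - x m * Lam a m.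
Proof. apply rec_Lam. intros; apply x_pos. Qed.

Lemma qpos m : (1 <= cf_q a (S m))%nat.
Proof. apply q_pos. intros; apply x_pos. Qed.

Lemma q_mono m : (cf_q a (S m) <= cf_q a (S (S m)))%nat.
Proof. rewrite cfq_SS. pose proof (digit_ge1 m (x_pos m)). nia. Qed.

Lemma Lam_sign m : (Nat.even m = true /\ Lam a m < 0) \/ (Nat.even m = false /\ 0 < Lam a m).
Proof.
  induction m as [|m IH].
  - left. split; auto. unfold Lam, cf_q, cf_p; simpl. lra.
  - rewrite LamS, Nat.even_succ, <- Nat.negb_even. pose proof (x_pos m).
    destruct IH as [[E L]|[E L]]; rewrite E; simpl; [right|left]; split; auto; nra.
Qed.

Lemma det m : (Nat.even m = true /\ (cf_q a m * cf_p a (S m) + 1 = cf_q a (S m) * cf_p a m)%nat)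
  \/ (Nat.even m = false /\ (cf_q a (S m) * cf_p a m + 1 = cf_q a m * cf_p a (S m))%nat).
Proof.
  induction m as [|m IH].
  - left. split; reflexivity.
  - rewrite Nat.even_succ, <- Nat.negb_even. rewrite cfq_SS, cfp_SS.
    destruct IH as [[E L]|[E L]]; rewrite E; simpl; [right|left]; split; auto; nia.
Qed.

Lemma Lam_bound n : (1 <= n)%nat -> INR (cf_q a n) * Rabs (Lam a n) < 1.
Proof.
  intros Hn. destruct n as [|m]; [lia|].
  assert (Id : INR (cf_q a (S (S m))) * Lam a (S m) - INR (cf_q a (S m)) * Lam a (S (S m))
     = INR (cf_q a (S m)) * INR (cf_p a (S (S m))) - INR (cf_q a (S (S m))) * INR (cf_p a (S m)))
    by (unfold Lam; ring).
  pose proof (q_mono m) as M. apply le_INR in M.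
  pose proof (qpos m) as Q. apply le_INR in Q. simpl in Q.
  destruct (det (S m)) as [[E D]|[E D]].
  - apply (f_equal INR) in D. rewrite !plus_INR, !mult_INR in D. simpl in D.
    destruct (Lam_sign (S m)) as [[E1 L1]|[E1 L1]]; [|congruence].
    destruct (Lam_sign (S (S m))) as [[E2 L2]|[E2 L2]].
    + rewrite Nat.even_succ, <- Nat.negb_even, E1 in E2. discriminate.
    + rewrite Rabs_left by lra. nra.
  - apply (f_equal INR) in D. rewrite !plus_INR, !mult_INR in D. simpl in D.
    destruct (Lam_sign (S m)) as [[E1 L1]|[E1 L1]]; [congruence|].
    destruct (Lam_sign (S (S m))) as [[E2 L2]|[E2 L2]].
    + rewrite Rabs_right by lra. nra.
    + rewrite Nat.even_succ, <- Nat.negb_even, E1 in E2. discriminate.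
Qed.
End CF.


Definition lprod (l : list R) : R := fold_right Rmult 1 l.

Lemma lprod_app l1 l2 : lprod (l1 ++ l2) = lprod l1 * lprod l2.
Proof. induction l1; simpl; [ring| rewrite IHl1; ring]. Qed.

Lemma lprod_perm l1 l2 : Permutation l1 l2 -> lprod l1 = lprod l2.
Proof. induction 1; simpl; try ring; congruence. Qed.

Lemma prodR_seq f N : prodR f N = lprod (map f (seq 1 N)).
Proof. induction N; [reflexivity|].
  rewrite seq_S, map_app, lprod_app, <- IHN. simpl. replace (S N) with (1 + N)%nat by lia. ring. Qed.

Lemma prodR_ext f g N : (forall t, (1 <= t <= N)%nat -> f t = g t) -> prodR f N = prodR g N.
Proof. induction N; intros H; simpl; [reflexivity|]. rewrite IHN, H; [reflexivity|lia|intros; apply H; lia]. Qed.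

Lemma prodR_mult f g N : prodR (fun t => f t * g t) N = prodR f N * prodR g N.
Proof. induction N; simpl; [ring|rewrite IHN; ring]. Qed.

Lemma prodR_abs f N : prodR (fun t => Rabs (f t)) N = Rabs (prodR f N).
Proof. induction N; simpl; [rewrite Rabs_R1; ring|rewrite IHN, Rabs_mult; ring]. Qed.

Lemma prodR_inv f N : prodR (fun t => / f t) N = / prodR f N.
Proof. induction N; simpl; [rewrite Rinv_1; ring|rewrite IHN, Rinv_mult; ring]. Qed.

Lemma prodR_nonneg f N : (forall t, 0 <= f t) -> 0 <= prodR f N.
Proof. intros H; induction N; simpl; [lra|apply Rmult_le_pos; auto]. Qed.

Lemma lprod_reindex (f : nat -> R) (s : nat -> nat) (l1 l2 : list nat) :
  (forall x y, In x l1 -> In y l1 -> s x = s y -> x = y) -> NoDup l1 ->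
  (length l2 <= length l1)%nat -> (forall x, In x l1 -> In (s x) l2) ->
  lprod (map f (map s l1)) = lprod (map f l2).
Proof.
  intros Hinj Hnd Hlen Hin. apply lprod_perm, Permutation_map.
  apply NoDup_Permutation_bis.
  - apply NoDup_map_NoDup_ForallPairs; [intros x y Hx Hy; apply Hinj; auto | auto].
  - rewrite length_map; auto.
  - intros y Hy. apply in_map_iff in Hy. destruct Hy as [x [<- Hx]]. auto.
Qed.

Lemma prodR_reindex (f : nat -> R) (s : nat -> nat) N :
  (forall x y, (1 <= x <= N)%nat -> (1 <= y <= N)%nat -> s x = s y -> x = y) ->
  (forall x, (1 <= x <= N)%nat -> (1 <= s x <= N)%nat) ->
  prodR (fun r => f (s r)) N = prodR f N.
Proof.
  intros Hi Hr. rewrite !prodR_seq, <- map_map. apply lprod_reindex.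
  - intros x y Hx Hy. apply in_seq in Hx, Hy. apply Hi; lia.
  - apply seq_NoDup.
  - rewrite !length_seq. lia.
  - intros x Hx. apply in_seq in Hx. apply in_seq. specialize (Hr x). lia.
Qed.

Lemma frac_spec x z y : 0 <= y < 1 -> x = IZR z + y -> frac_part x = y.
Proof. intros H E. symmetry. apply (Int_part_frac_part_spec x z y H E). Qed.

Lemma sin_shift y k : Rabs (sin (y + INR k * PI)) = Rabs (sin y).
Proof. induction k. simpl. rewrite Rmult_0_l, Rplus_0_r. reflexivity.
  rewrite S_INR. replace (y + (INR k + 1) * PI) with (y + INR k * PI + PI) by ring.
  rewrite neg_sin, Rabs_Ropp. exact IHk. Qed.

Lemma sin_pm a b : sin (a + b) * sin (a - b) = sin a ^ 2 - sin b ^ 2.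
Proof. rewrite sin_plus, sin_minus. pose proof (sin2_cos2 a). pose proof (sin2_cos2 b).
  unfold Rsqr in *. nra. Qed.

Lemma mult_no r q A B : (0 < r < q)%nat -> (r + q * A = q * B)%nat -> False.
Proof. intros H E. destruct (le_lt_dec B A). assert (q * B <= q * A)%nat by (apply Nat.mul_le_mono_l; auto). lia.
  assert (q * (A + 1) <= q * B)%nat by (apply Nat.mul_le_mono_l; lia). nia. Qed.

Lemma z_no r1 r2 q X : (1 <= r1 <= q)%Z -> (1 <= r2 <= q)%Z -> (r1 - r2 = q * X)%Z -> r1 = r2.
Proof. intros. destruct (Z.lt_trichotomy X 0) as [H2|[H2|H2]]; nia. Qed.

Section Core.
Variables (al : R) (q q' p pp : nat) (L : R).
Hypothesis Hq : (1 <= q)%nat.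
Hypothesis HL : L = INR q * al - INR p.
Hypothesis He : 0 < Rabs L.
Hypothesis Hb : INR q * Rabs L < 1.
Hypothesis Hpar : ((q' * p = 1 + q * pp)%nat /\ L < 0) \/ ((q' * p + 1 = q * pp)%nat /\ 0 < L).

Definition f t := frac_part (INR t * INR q' / INR q).
Definition th t := INR t / INR q - Rabs L * (f t - 1/2).
Definition s t := 2 * sin (PI * th t).
Definition G t := Rabs (2 * sin (PI * (th t + L/2))).
Definition tr r := ((r * p) mod q)%nat.
Definition h t := match t with O => Rabs (2 * sin (PI * L)) | _ => G t end.

Lemma qR : 0 < INR q.
Proof. apply lt_0_INR; lia. Qed.

Lemma tr_lt r : (tr r < q)%nat.
Proof. unfold tr. apply Nat.mod_upper_bound. lia. Qed.

Lemma fr r : (1 <= r < q)%nat -> (tr r <> 0)%nat /\ 0 < f (tr r) < 1 /\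
   INR (tr r) / INR q + INR r * L / INR q = th (tr r) + L/2.
Proof.
  intros Hr. pose proof qR as QR.
  pose proof (Nat.div_mod_eq (r * p) q) as E. fold (tr r) in E.
  set (t := tr r) in *. set (k := ((r * p) / q)%nat) in *.
  assert (rq : 0 < INR r / INR q < 1).
  { assert (0 < INR r) by (apply lt_0_INR; lia). assert (INR r < INR q) by (apply lt_INR; lia).
    split. apply Rdiv_lt_0_compat; lra. apply Rmult_lt_reg_r with (INR q); auto.
    unfold Rdiv. rewrite Rmult_assoc, Rinv_l; lra. }
  destruct Hpar as [[P LL]|[P LL]].
  - assert (E2 : (t * q' + q * (k * q') = r + q * (r * pp))%nat).
    { assert (r * p * q' = (q * k + t) * q')%nat by (rewrite <- E; reflexivity).
      assert (r * p * q' = r * (q' * p))%nat by ring. rewrite P in H0. nia. }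
    assert (t <> 0%nat). { intro T. rewrite T in E2. apply (mult_no r q (r * pp) (k * q')); lia. }
    assert (F : f t = INR r / INR q).
    { unfold f. apply frac_spec with (Z.of_nat (r * pp) - Z.of_nat (k * q'))%Z; [lra|].
      rewrite minus_IZR, <- !INR_IZR_INZ. apply (f_equal INR) in E2.
      rewrite !plus_INR, !mult_INR in E2. rewrite !mult_INR. field_simplify_eq; [|lra].
      nra. }
    split; auto. rewrite F. split; [lra|]. unfold th. rewrite F, Rabs_left by lra. field. lra.
  - assert (E2 : (t * q' + q * (k * q') + r = q * (r * pp))%nat).
    { assert (r * p * q' = (q * k + t) * q')%nat by (rewrite <- E; reflexivity).
      assert (r * p * q' + r = r * (q' * p + 1))%nat by ring. rewrite P in H0. nia. }
    assert (t <> 0%nat). { intro T. rewrite T in E2. apply (mult_no r q (k * q') (r * pp)); lia. }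
    assert (F : f t = 1 - INR r / INR q).
    { unfold f. apply frac_spec with (Z.of_nat (r * pp) - Z.of_nat (k * q') - 1)%Z; [lra|].
      rewrite !minus_IZR, <- !INR_IZR_INZ. apply (f_equal INR) in E2.
      rewrite !plus_INR, !mult_INR in E2. rewrite !mult_INR. field_simplify_eq; [|lra].
      simpl. nra. }
    split; auto. rewrite F. split; [lra|]. unfold th. rewrite F, Rabs_right by lra. field. lra.
Qed.

Lemma tr_q : tr q = 0%nat.
Proof. unfold tr. rewrite Nat.mul_comm. apply Nat.Div0.mod_mul. Qed.

Lemma term r : (1 <= r <= q)%nat -> Rabs (2 * sin (PI * INR r * al)) = h (tr r).
Proof.
  intros Hr. pose proof qR as QR.
  assert (Al : al = (L + INR p) / INR q) by (rewrite HL; field; lra).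
  destruct (Nat.eq_dec r q) as [->|Hne].
  - rewrite tr_q. simpl h. rewrite !Rabs_mult. f_equal.
    replace (PI * INR q * al) with (PI * L + INR p * PI) by (rewrite Al; field; lra).
    apply sin_shift.
  - destruct (fr r) as [T [_ F]]; [lia|].
    pose proof (Nat.div_mod_eq (r * p) q) as E. fold (tr r) in E.
    destruct (tr r) as [|t] eqn:Et; [congruence|]. simpl h. unfold G. rewrite <- Et in *.
    rewrite !Rabs_mult. f_equal. rewrite <- F.
    apply (f_equal INR) in E. rewrite mult_INR, plus_INR, mult_INR in E.
    replace (PI * INR r * al) with (PI * (INR (tr r) / INR q + INR r * L / INR q) + INR ((r * p) / q) * PI).
    apply sin_shift. rewrite Al. field_simplify_eq; [|lra]. nra.
Qed.

Lemma tr_inj r1 r2 : (1 <= r1 <= q)%nat -> (1 <= r2 <= q)%nat -> tr r1 = tr r2 -> r1 = r2.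
Proof.
  intros H1 H2 Et.
  pose proof (Nat.div_mod_eq (r1 * p) q) as E1. pose proof (Nat.div_mod_eq (r2 * p) q) as E2.
  fold (tr r1) in E1. fold (tr r2) in E2. rewrite Et in E1.
  set (k1 := ((r1 * p) / q)%nat) in *. set (k2 := ((r2 * p) / q)%nat) in *.
  assert (E3 : (r1 * p + q * k2 = r2 * p + q * k1)%nat) by lia.
  assert (E4 : (r1 * (q' * p) + q * (k2 * q') = r2 * (q' * p) + q * (k1 * q'))%nat).
  { apply (f_equal (fun x => x * q')%nat) in E3. nia. }
  destruct Hpar as [[P _]|[P _]].
  - rewrite P in E4. apply Nat2Z.inj.
    apply (z_no _ _ (Z.of_nat q) (Z.of_nat (r2 * pp) + Z.of_nat (k1 * q') - Z.of_nat (r1 * pp) - Z.of_nat (k2 * q'))); try lia.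
  - assert (E5 : (r1 * (q' * p + 1) + r2 + q * (k2 * q') = r2 * (q' * p + 1) + r1 + q * (k1 * q'))%nat) by nia.
    rewrite P in E5. apply Nat2Z.inj.
    apply (z_no _ _ (Z.of_nat q) (Z.of_nat (r1 * pp) + Z.of_nat (k2 * q') - Z.of_nat (r2 * pp) - Z.of_nat (k1 * q'))); try lia.
Qed.

Lemma tr_perm : Permutation (map tr (seq 1 q)) (seq 0 q).
Proof.
  apply NoDup_Permutation_bis.
  - apply NoDup_map_NoDup_ForallPairs; [|apply seq_NoDup].
    intros x y Hx Hy. apply in_seq in Hx, Hy. apply tr_inj; lia.
  - rewrite length_map, !length_seq. lia.
  - intros y Hy. apply in_map_iff in Hy. destruct Hy as [x [<- Hx]]. apply in_seq.
    pose proof (tr_lt x). lia.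
Qed.

Lemma f_range t : (1 <= t <= q - 1)%nat -> 0 < f t < 1.
Proof.
  intros Ht. assert (In t (map tr (seq 1 q))).
  { apply Permutation_in with (seq 0 q). apply Permutation_sym, tr_perm. apply in_seq. lia. }
  apply in_map_iff in H. destruct H as [r [<- Hr]]. apply in_seq in Hr.
  destruct (Nat.eq_dec r q) as [->|]. rewrite tr_q in Ht. lia.
  apply (fr r). lia.
Qed.

Lemma f0 : f 0 = 0.
Proof. unfold f. simpl. unfold Rdiv. rewrite !Rmult_0_l. apply fp_R0. Qed.

Lemma th0 : th 0 = Rabs L / 2.
Proof. unfold th. rewrite f0. simpl. unfold Rdiv. rewrite Rmult_0_l. ring. Qed.

Lemma f_refl t : (1 <= t <= q - 1)%nat -> f (q - t) = 1 - f t.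
Proof.
  intros Ht. pose proof (f_range t Ht). pose proof qR.
  unfold f in *. set (y := INR t * INR q' / INR q) in *.
  apply frac_spec with (Z.of_nat q' - Int_part y - 1)%Z; [lra|].
  rewrite !minus_IZR, <- INR_IZR_INZ. rewrite minus_INR by lia.
  pose proof (Rplus_Int_part_frac_part y). simpl IZR.
  replace ((INR q - INR t) * INR q' / INR q) with (INR q' - y) by (unfold y; field; lra). lra.
Qed.

Lemma th_refl t : (1 <= t <= q - 1)%nat -> th (q - t) = 1 - th t.
Proof. intros Ht. pose proof qR. unfold th. rewrite f_refl by auto. rewrite minus_INR by lia. field. lra. Qed.

Lemma eps_bound : Rabs L < 1 / INR q.
Proof. pose proof qR. apply Rmult_lt_reg_l with (INR q); auto. unfold Rdiv. rewrite <- Rmult_assoc, Rmult_1_r, Rinv_r; lra. Qed.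

Lemma s_pos t : (1 <= t <= q - 1)%nat -> 0 < s t ^ 2 - s 0 ^ 2.
Proof.
  intros Ht. pose proof (f_range t Ht). pose proof qR. pose proof eps_bound. pose proof PI_RGT_0.
  assert (T1 : 1 / INR q <= INR t / INR q).
  { unfold Rdiv. apply Rmult_le_compat_r. left; apply Rinv_0_lt_compat; lra. apply (le_INR 1); lia. }
  assert (T2 : INR t / INR q <= 1 - 1 / INR q).
  { replace (1 - 1 / INR q) with ((INR q - 1) / INR q) by (field; lra). unfold Rdiv.
    apply Rmult_le_compat_r. left; apply Rinv_0_lt_compat; lra.
    assert (INR t <= INR (q - 1)) by (apply le_INR; lia). rewrite minus_INR in H3 by lia. simpl in H3. lra. }
  pose proof (Rabs_pos L).
  assert (B1 : 0 < th t + Rabs L / 2 < 1) by (unfold th; split; nra).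
  assert (B2 : 0 < th t - Rabs L / 2 < 1) by (unfold th; split; nra).
  assert (A1 : 0 < sin (PI * th t + PI * (Rabs L / 2))).
  { apply sin_gt_0; nra. }
  assert (A2 : 0 < sin (PI * th t - PI * (Rabs L / 2))).
  { apply sin_gt_0; nra. }
  unfold s. rewrite th0.
  replace ((2 * sin (PI * th t)) ^ 2 - (2 * sin (PI * (Rabs L / 2))) ^ 2) with
    (4 * (sin (PI * th t) ^ 2 - sin (PI * (Rabs L / 2)) ^ 2)) by ring.
  rewrite <- sin_pm. nra.
Qed.

Lemma G_pair t : (1 <= t <= q - 1)%nat -> G t * G (q - t) = s t ^ 2 - s 0 ^ 2.
Proof.
  intros Ht. pose proof (s_pos t Ht). unfold G. rewrite th_refl by auto.
  replace (PI * (1 - th t + L / 2)) with (PI - (PI * th t - PI * (L/2))) by ring.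
  rewrite sin_PI_x, <- Rabs_mult.
  replace (PI * (th t + L/2)) with (PI * th t + PI * (L/2)) by ring.
  replace (2 * sin (PI * th t + PI * (L / 2)) * (2 * sin (PI * th t - PI * (L / 2)))) with
    (4 * (sin (PI * th t + PI * (L / 2)) * sin (PI * th t - PI * (L / 2)))) by ring.
  rewrite sin_pm. unfold s at 2. rewrite th0.
  assert (SQ : sin (PI * (L / 2)) ^ 2 = sin (PI * (Rabs L / 2)) ^ 2).
  { destruct (Rle_or_lt 0 L). rewrite Rabs_right by lra. reflexivity.
    rewrite Rabs_left by lra. replace (PI * (- L / 2)) with (- (PI * (L / 2))) by field.
    rewrite sin_neg. ring. }
  rewrite SQ. rewrite Rabs_right. unfold s. ring.
  unfold s in H. rewrite th0 in H. nra.
Qed.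

Lemma core_main (SP : prodR (fun t => 2 * sin (PI * INR t / INR q)) (q - 1) = INR q) :
  prodR (fun r => Rabs (2 * sin (PI * INR r * al))) q =
  Rabs (2 * INR q * sin (PI * L)) *
  Rabs (prodR (fun t => s t / (2 * sin (PI * INR t / INR q))) (q - 1)) *
  prodR (fun t => sqrt (1 - (s 0) ^ 2 / (s t) ^ 2)) (q - 1).
Proof.
  pose proof qR as QR.
  rewrite (prodR_ext _ (fun r => h (tr r))) by (intros; apply term; lia).
  rewrite prodR_seq, <- map_map.
  rewrite (lprod_perm _ (map h (seq 0 q))) by (apply Permutation_map, tr_perm).
  assert (SQ : seq 0 q = 0%nat :: seq 1 (q - 1)) by (replace q with (S (q - 1)) at 1 by lia; reflexivity).
  rewrite SQ. simpl map. simpl lprod.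
  fold (lprod (map h (seq 1 (q - 1)))). rewrite <- prodR_seq.
  rewrite (prodR_ext h G) by (intros t Ht; destruct t; [lia|reflexivity]).
  set (C := prodR (fun t => sqrt (1 - s 0 ^ 2 / s t ^ 2)) (q - 1)).
  assert (XY : prodR G (q - 1) = prodR (fun t => Rabs (s t)) (q - 1) * C).
  { apply Rsqr_inj.
    - apply prodR_nonneg. intros; apply Rabs_pos.
    - apply Rmult_le_pos. apply prodR_nonneg. intros; apply Rabs_pos.
      apply prodR_nonneg. intros; apply sqrt_pos.
    - unfold Rsqr.
      rewrite <- (prodR_reindex G (fun t => q - t)%nat (q - 1)) at 2 by (intros; lia).
      unfold C. rewrite <- !prodR_mult. apply prodR_ext. intros t Ht.
      rewrite G_pair by auto. pose proof (s_pos t Ht).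
      assert (0 < s t ^ 2) by nra.
      assert (0 <= 1 - s 0 ^ 2 / s t ^ 2).
      { assert (s 0 ^ 2 / s t ^ 2 <= 1). { apply Rmult_le_reg_r with (s t ^ 2); auto.
          unfold Rdiv. rewrite Rmult_assoc, Rinv_l by lra. nra. } lra. }
      replace (Rabs (s t) * sqrt (1 - s 0 ^ 2 / s t ^ 2) * (Rabs (s t) * sqrt (1 - s 0 ^ 2 / s t ^ 2)))
        with ((Rabs (s t) * Rabs (s t)) * (sqrt (1 - s 0 ^ 2 / s t ^ 2) * sqrt (1 - s 0 ^ 2 / s t ^ 2))) by ring.
      rewrite sqrt_sqrt by auto. rewrite <- Rabs_mult, Rabs_right by (apply Rle_ge; nra). field. intro Z0; rewrite Z0 in *; lra. }
  rewrite XY.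
  assert (PB : prodR (fun t => Rabs (s t)) (q - 1) =
     INR q * Rabs (prodR (fun t => s t / (2 * sin (PI * INR t / INR q))) (q - 1))).
  { unfold Rdiv. rewrite prodR_mult, prodR_inv. change (prodR (fun t : nat => 2 * sin (PI * INR t * / INR q)) (q - 1)) with (prodR (fun t : nat => 2 * sin (PI * INR t / INR q)) (q - 1)). rewrite SP, Rabs_mult, <- prodR_abs.
    rewrite Rabs_inv, Rabs_right by lra. field. lra. }
  rewrite PB. rewrite !Rabs_mult. rewrite (Rabs_right (INR q)) by lra. ring.
Qed.
End Core.

Theorem lemma3p1 (alpha : R) (h0 : 0 < alpha) (h1 : alpha < 1)
  (hirr : irrational alpha) (n : nat) (hn : (1 <= n)%nat) :
  Psin (cf_q alpha n) alpha = A_n alpha n * B_n alpha n * C_n alpha n.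
Proof.
  destruct n as [|m]; [lia|].
  unfold Psin, A_n, B_n, C_n, s_nt.
  replace (S m - 1)%nat with m by lia.
  assert (Hsign := Lam_sign alpha h0 h1 hirr (S m)).
  apply (core_main alpha (cf_q alpha (S m)) (cf_q alpha m) (cf_p alpha (S m)) (cf_p alpha m) (Lam alpha (S m))).
  - apply (qpos alpha h0 h1 hirr m).
  - reflexivity.
  - destruct Hsign as [[_ L]|[_ L]]; [rewrite Rabs_left|rewrite Rabs_right]; lra.
  - apply (Lam_bound alpha h0 h1 hirr). lia.
  - rewrite Nat.even_succ, <- Nat.negb_even in Hsign.
    destruct (det alpha m) as [[E D]|[E D]]; rewrite E in Hsign; simpl in Hsign.
    + right. destruct Hsign as [[? ?]|[_ L]]; [discriminate|]. split; [lia|exact L].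
    + left. destruct Hsign as [[_ L]|[? ?]]; [|discriminate]. split; [lia|exact L].
  - apply sinprod. apply (qpos alpha h0 h1 hirr m).
Qed.
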